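(* Let $r\ge 2$ and let $\mathcal{H}=\{H_1,\ldots,H_n\}$ be a collection of $n$ matchings, each of size $N$, in an $r$-uniform hypergraph. Let $m$ be the size of a maximum rainbow matching for $\mathcal{H}$. Then $$(n-m)\frac{2N-(r+1)m}{r-1}\leq\frac12\binom{2r}{r}m.$$
   Context: A hypergraph is $r$-uniform if every edge contains exactly $r$ vertices. A matching is a set of pairwise vertex-disjoint edges. Given a collection (repetitions allowed) of matchings $H_1,\dots,H_n$ in a hypergraph, a matching $M\subseteq \bigcup_{i=1}^n H_i$ is rainbow if there is an injection $\phi:M\to[n]$ such that every edge $e\in M$ belongs to $H_{\phi(e)}$. *)

(* Defs.v *)
From mathcomp Require Import all_boot all_order all_algebra.
Set Implicit Arguments. Unset Strict Implicit. Unset Printing Implicit Defensive.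

Definition uniform (V : finType) (r : nat) (E : {set {set V}}) : Prop :=
  forall e, e \in E -> #|e| = r.

Definition is_matching (V : finType) (M : {set {set V}}) : Prop :=
  forall e f, e \in M -> f \in M -> e != f -> [disjoint e & f].

Definition rainbow (V : finType) (n : nat) (H : 'I_n -> {set {set V}})
  (M : {set {set V}}) : Prop :=
  is_matching M /\
  exists phi : {set V} -> 'I_n,
    {in M &, injective phi} /\ (forall e, e \in M -> e \in H (phi e)).

(* Main.v *)
Require Import Defs.
From mathcomp Require Import all_boot all_order all_algebra.
From mathcomp Require Import zify ring lra.
Import Order.TTheory GRing.Theory Num.Theory.

Lemma card_setP (T : finType) (A : {set T}) (p : pred T) :
  #|[set x in A | p x]| = \sum_(x in A) (p x : nat).
Proof.
rewrite -sum1_card [LHS]big_mkcond [RHS]big_mkcond; apply: eq_bigr => x _.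
by rewrite !inE; case: (x \in A); case: (p x).
Qed.

Lemma sum_meet (V : finType) (F : {set {set V}}) (S : {set V}) :
  is_matching F -> \sum_(f in F) #|f :&: S| <= #|S|.
Proof.
move=> mF.
have e1 : forall f, #|f :&: S| = \sum_(x in S) (x \in f : nat).
  move=> f; rewrite -card_setP; apply: eq_card => x; rewrite !inE andbC.
  by [].
rewrite (eq_bigr _ (fun f _ => e1 f)) exchange_big /=.
rewrite -[X in _ <= X]sum1_card; apply: leq_sum => x xS.
case: (boolP [exists f in F, x \in f]) => [/existsP [f0 /andP [f0F xf0]] | nf].
  rewrite (bigD1 f0) //= xf0 big1 // => g /andP [gF gf0].
  case xg: (x \in g) => //=; exfalso.
  move: (mF g f0 gF f0F gf0); rewrite -setI_eq0 => /eqP/setP/(_ x).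
  by rewrite !inE xg xf0.
rewrite big1 // => g gF; case xg: (x \in g) => //=; case/negP: nf.
by apply/existsP; exists g; rewrite gF xg.
Qed.

Lemma card_bigcup_le (V : finType) (M : {set {set V}}) :
  #|\bigcup_(e in M) e| <= \sum_(e in M) #|e|.
Proof.
apply: (big_ind2 (fun (A : {set V}) k => is_true (#|A| <= k))); first by rewrite cards0.
  move=> A1 k1 A2 k2 h1 h2; rewrite cardsU; apply: leq_trans (leq_subr _ _) _.
  exact: leq_add.
by [].
Qed.

Lemma rainbow_ext (V : finType) (n : nat) (H : 'I_n -> {set {set V}})
  (M E F : {set {set V}}) (phi psi : {set V} -> 'I_n) :
 is_matching M -> {in M &, injective phi} -> (forall e, e \in M -> e \in H (phi e)) ->
 is_matching F -> {in F &, injective psi} -> (forall f, f \in F -> f \in H (psi f)) ->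
 (forall f, f \in F -> psi f \notin phi @: M) ->
 (forall f g, f \in F -> g \in M :\: E -> [disjoint f & g]) ->
 rainbow H ((M :\: E) :|: F).
Proof.
move=> mM iphi Hphi mF ipsi Hpsi new dis.
have inM : forall g, g \in (M :\: E) :|: F -> g \notin F -> g \in M.
  by move=> g; rewrite !inE => /orP [/andP [_ ->] | ->].
have inME : forall g, g \in (M :\: E) :|: F -> g \notin F -> g \in M :\: E.
  by move=> g; rewrite inE => /orP [-> | ->].
split.
  move=> f g fU gU fg.
  case: (boolP (f \in F)) => fF; case: (boolP (g \in F)) => gF.
  - exact: mF.
  - exact: dis fF (inME g gU gF).
  - rewrite disjoint_sym; exact: dis gF (inME f fU fF).
  - exact: mM (inM f fU fF) (inM g gU gF) fg.
exists (fun g => if g \in F then psi g else phi g); split.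
  move=> f g fU gU /=.
  case: (boolP (f \in F)) => fF; case: (boolP (g \in F)) => gF h.
  - exact: ipsi.
  - by move: (new f fF); rewrite h imset_f // (inM g gU gF).
  - by move: (new g gF); rewrite -h imset_f // (inM f fU fF).
  - exact: iphi (inM f fU fF) (inM g gU gF) h.
move=> f fU /=; case: (boolP (f \in F)) => fF; first exact: Hpsi.
exact: Hphi (inM f fU fF).
Qed.

Local Open Scope ring_scope.

Definition bw (a b : nat) : rat := ('C(a + b, a))%:R^-1.

Lemma bw_le1 a b : bw a b <= 1.
Proof.
rewrite /bw invf_le1 ?ler1n ?ltr0n ?bin_gt0 ?leq_addr //.
Qed.

Lemma bw_ge0 a b : 0 <= bw a b.
Proof. by rewrite /bw invr_ge0 ler0n. Qed.

Lemma bw_step a b : (0 < b)%N -> (b%:R * bw a b.-1 = (a + b)%:R * bw a b).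
Proof.
move=> b0; rewrite /bw.
have h := mul_bin_down (a + b) a.
rewrite addKn in h.
have e : (a + b.-1 = (a + b).-1)%N by rewrite -!subn1 addnBA.
rewrite e.
have c1 : ('C((a + b).-1, a))%:R != 0 :> rat.
  by rewrite pnatr_eq0 -lt0n bin_gt0; lia.
have c2 : ('C(a + b, a))%:R != 0 :> rat by rewrite pnatr_eq0 -lt0n bin_gt0 leq_addr.
apply: (canLR (mulfK c1)).
rewrite -mulrA (mulrC _ ('C(_, _))%:R) mulrA -natrM h natrM.
by rewrite mulfK.
Qed.


Lemma per_i (V : finType) (X A B : {set V}) : A \subset X -> B \subset X -> [disjoint A & B] -> B != set0 ->
  #|X|%:R * bw #|A| #|B| <= \sum_(x | (x \in X) && (x \notin A)) bw #|A| #|B :\ x|.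
Proof.
move=> AX BX dAB Bn0.
have b0 : (0 < #|B|)%N by rewrite card_gt0.
rewrite (eq_bigl (fun x => x \in X :\: A)); last by move=> x; rewrite in_setD andbC.
rewrite (big_setID B).
have eB : (X :\: A) :&: B = B.
  apply/setP=> x; rewrite !inE; case xB: (x \in B) => /=; last by rewrite andbF.
  rewrite (subsetP BX) //; case xA: (x \in A) => //.
  by move: dAB; rewrite -setI_eq0 => /eqP /setP /(_ x); rewrite !inE xA xB.
rewrite eB /=.
rewrite (eq_bigr (fun _ => bw #|A| #|B|.-1)); last first.
  by move=> x xB; rewrite (cardsD1 x B) xB add1n.
rewrite (eq_bigr (fun _ => bw #|A| #|B|) (P := fun x => x \in (X :\: A) :\: B)); last first.
  by move=> x; rewrite inE => /andP [xB _]; rewrite (cardsD1 x B) (negbTE xB) add0n.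
rewrite !sumr_const -[_ *+ #|B|]mulr_natl -[_ *+ #|_ :\: B|]mulr_natl bw_step //.
have cX : (#|X| <= #|A| + #|B| + #|(X :\: A) :\: B|)%N.
  rewrite -(cardsID A X) -(cardsID B (X :\: A)) eB addnA leq_add2r leq_add2r.
  by rewrite setIC subset_leq_card // subsetIl.
rewrite -mulrDl -natrD ler_wpM2r ?bw_ge0 // ler_nat.
by [].
Qed.

Lemma single_le1 (I : finType) (P : pred I) (F : I -> rat) :
  (forall i j, P i -> P j -> i = j) -> (forall i, F i <= 1) -> \sum_(i | P i) F i <= 1.
Proof.
move=> Pu F1.
case: (pickP P) => [i0 Pi0|P0]; last by rewrite big_pred0 // ler01.
rewrite (bigD1 i0) //= big1 ?addr0 //.
by move=> j /andP [Pj /eqP jn]; case: jn; apply: Pu.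
Qed.

Lemma bollobas (V : finType) (I : finType) (A : I -> {set V}) : forall k (X : {set V}) (B : I -> {set V}) (P : pred I),
  #|X| = k ->
  (forall i, P i -> A i \subset X) -> (forall i, P i -> B i \subset X) ->
  (forall i, P i -> [disjoint A i & B i]) ->
  (forall i j, P i -> P j -> i != j -> ~~ [disjoint A i & B j]) ->
  \sum_(i | P i) bw #|A i| #|B i| <= 1.
Proof.
elim=> [|k IH] X B P cX AX BX dAB cross.
  apply: single_le1; last by move=> i; apply: bw_le1.
  move=> i j Pi Pj; case: (eqVneq i j) => // ij; move/negP: (cross i j Pi Pj ij); case.
  have X0 : X = set0 by apply/eqP; rewrite -cards_eq0 cX.
  have : A i \subset set0 by rewrite -X0 AX.
  by rewrite subset0 => /eqP ->; rewrite -setI_eq0 set0I.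
case: (boolP [exists i, P i && (B i == set0)]) => [/existsP [i0 /andP [Pi0 /eqP B0]]|nB0].
  apply: single_le1; last by move=> i; apply: bw_le1.
  have h : forall j, P j -> j = i0.
    move=> j Pj; case: (eqVneq j i0) => // ji; move/negP: (cross j i0 Pj Pi0 ji); case.
    by rewrite B0 -setI_eq0 setI0.
  by move=> i j Pi Pj; rewrite (h i Pi) (h j Pj).
have Bn0 : forall i, P i -> B i != set0.
  move=> i Pi; apply: contraNN nB0 => Bi; apply/existsP; exists i; by rewrite Pi.
have key : forall x, x \in X ->
    \sum_(i | P i && (x \notin A i)) bw #|A i| #|B i :\ x| <= 1.
  move=> x xX.
  apply: (IH (X :\ x) (fun i => B i :\ x) (fun i => P i && (x \notin A i))).
  - by move: cX; rewrite (cardsD1 x X) xX add1n => -[].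
  - move=> i /andP [Pi xA]; apply/subsetP=> y yA; rewrite !inE (subsetP (AX i Pi)) // andbT.
    by apply: contraNneq xA => <-.
  - move=> i /andP [Pi _]; apply/subsetP=> y; rewrite !inE => /andP [-> yB] /=.
    exact: (subsetP (BX i Pi)).
  - move=> i /andP [Pi _]; apply: disjointWr (dAB i Pi); exact: subsetDl.
  - move=> i j /andP [Pi xA] /andP [Pj _] ij.
    have := cross i j Pi Pj ij; rewrite -!setI_eq0 => /set0Pn [y]; rewrite !inE => /andP [yA yB].
    apply/set0Pn; exists y; rewrite !inE yA yB andbT /=.
    by apply: contraNneq xA => <-.
have kpos : (0 : rat) < #|X|%:R by rewrite cX ltr0n.
rewrite -(ler_pM2l kpos) mulr1 mulr_sumr.
apply: le_trans (_ : \sum_(i | P i) \sum_(x | (x \in X) && (x \notin A i)) bw #|A i| #|B i :\ x| <= _).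
  apply: ler_sum => i Pi; apply: per_i; [exact: AX | exact: BX | exact: dAB | exact: Bn0].
rewrite (exchange_big_dep (fun x => x \in X)) /=; last by move=> i x _ /andP [].
apply: le_trans (_ : \sum_(x in X) (1 : rat) <= _); last by rewrite sumr_const.
apply: ler_sum => x xX.
rewrite (eq_bigl (fun i => P i && (x \notin A i))); first exact: key.
by move=> i; rewrite xX.
Qed.


Theorem lemma2p1 (V : finType) (r n N m : nat) (H : 'I_n -> {set {set V}}) :
  (2 <= r)%N ->
  (forall i, uniform r (H i) /\ is_matching (H i) /\ #|H i| = N) ->
  (exists M, rainbow H M /\ #|M| = m) ->
  (forall M, rainbow H M -> (#|M| <= m)%N) ->
  ((n%:R - m%:R) * (((2 * N)%N)%:R - ((r + 1) * m)%N%:R) / (r - 1)%N%:R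
     <= 2^-1 * ('C(2 * r, r))%:R * m%:R :> rat).
Proof.
move=> r2 Hi [M [[mM [phi [iphi Hphi]]] cM]] Mmax.
set W := \bigcup_(e in M) e.
set U := ~: [set phi e | e in M].
have cardH : forall i f, f \in H i -> #|f| = r by move=> i f; case: (Hi i) => u _; exact: u.
have matH : forall i, is_matching (H i) by move=> i; case: (Hi i) => _ [].
have NH : forall i, #|H i| = N by move=> i; case: (Hi i) => _ [].
have nonemp : forall i f, f \in H i -> f != set0.
  move=> i f fH; rewrite -card_gt0 (cardH i f fH); lia.
have Mr : forall e, e \in M -> #|e| = r by move=> e eM; exact: cardH (Hphi e eM).
have MW : forall e, e \in M -> e \subset W by move=> e eM; apply: bigcup_sup eM.
have F1 : forall i f, i \in U -> f \in H i -> f :&: W != set0.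
  move=> i f iU fH; apply/negP => /eqP fW0.
  have fM : f \notin M.
    apply/negP => fM; move/eqP: fW0; apply/negP; rewrite (setIidPl (MW f fM)); exact: nonemp fH.
  have R : rainbow H ((M :\: set0) :|: [set f]).
    apply: (@rainbow_ext V n H M set0 [set f] phi (fun _ => i) mM iphi Hphi).
    - by move=> g h; rewrite !inE => /eqP -> /eqP ->; rewrite eqxx.
    - by move=> g h; rewrite !inE => /eqP -> /eqP ->.
    - by move=> g; rewrite inE => /eqP ->.
    - by move=> g _; rewrite -in_setC.
    - move=> g h; rewrite inE => /eqP ->; rewrite inE => /andP [_ hM].
      rewrite -setI_eq0; apply/eqP; apply/setP => x; rewrite !inE; apply/negP => /andP [xf xh].
      by move/setP: fW0 => /(_ x); rewrite !inE xf (subsetP (MW h hM)).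
  have := Mmax _ R; rewrite setD0 setUC cardsU1 fM cM /=; lia.
have priv_dis : forall e f g, e \in M -> f :&: W \subset e -> g \in M -> g != e -> [disjoint f & g].
  move=> e f g eM fWe gM ge.
  rewrite -setI_eq0; apply/eqP/setP => x; rewrite !inE; apply/negP => /andP [xf xg].
  have xe : x \in e by apply: (subsetP fWe); rewrite inE xf (subsetP (MW g gM)).
  by move: (mM g e gM eM ge); rewrite -setI_eq0 => /eqP/setP/(_ x); rewrite !inE xg xe.
have F2 : forall e i j f g, e \in M -> i \in U -> j \in U -> i != j -> f \in H i -> g \in H j ->
    f :&: W \subset e -> g :&: W \subset e -> ~~ [disjoint f & g].
  move=> e i j f g eM iU jU ij fH gH fWe gWe; apply/negP => dfg.
  have fg : f != g.
    apply/eqP => efg; move: dfg; rewrite -efg -setI_eq0 setIid; apply/negP; exact: nonemp fH.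
  have gf : (g == f) = false by rewrite eq_sym; apply/negbTE.
  have fM : f \notin M :\ e.
    apply/negP; rewrite !inE => /andP [fe fM].
    have := priv_dis e f f eM fWe fM fe; rewrite -setI_eq0 setIid; apply/negP; exact: nonemp fH.
  have gM : g \notin M :\ e.
    apply/negP; rewrite !inE => /andP [ge gM].
    have := priv_dis e g g eM gWe gM ge; rewrite -setI_eq0 setIid; apply/negP; exact: nonemp gH.
  have R : rainbow H ((M :\: [set e]) :|: [set f; g]).
    apply: (@rainbow_ext V n H M [set e] [set f; g] phi (fun h => if h == f then i else j) mM iphi Hphi).
    - move=> a b; rewrite !inE => /orP [] /eqP -> /orP [] /eqP ->; rewrite ?eqxx //= => _; by rewrite // disjoint_sym.
    - move=> a b; rewrite !inE => /orP [] /eqP -> /orP [] /eqP ->; rewrite ?eqxx ?gf //= => eij; by rewrite eij eqxx in ij.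
    - by move=> a; rewrite !inE => /orP [] /eqP ->; rewrite ?eqxx ?gf.
    - by move=> a _; case: (a == f); rewrite -in_setC.
    - move=> a b; rewrite !inE => /orP [] /eqP -> /andP [be bM].
        exact: priv_dis eM fWe bM be.
      exact: priv_dis eM gWe bM be.
  have I0 : (M :\ e) :&: [set f; g] = set0.
    apply/setP => x; rewrite in_setI in_set2 in_set0; apply/negP => /andP [xM /orP [] /eqP xe].
      by move: xM; rewrite xe (negbTE fM).
    by move: xM; rewrite xe (negbTE gM).
  have := Mmax _ R; rewrite cardsU I0 cards0 subn0 cards2 fg.
  have := cardsD1 e M; rewrite eM cM; lia.
pose priv (i : 'I_n) (e : {set V}) := [set f in H i | f :&: W \subset e].
have F3 : forall i, i \in U -> (2 * N <= r * m + \sum_(e in M) #|priv i e|)%N.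
  move=> i iU.
  have per : forall f, f \in H i -> (2 <= #|f :&: W| + \sum_(e in M) (f :&: W \subset e : nat))%N.
    move=> f fH; have := F1 i f iU fH; rewrite -card_gt0 => c0.
    case: (ltnP 1 #|f :&: W|) => c1; first lia.
    have /cards1P [w ew] : #|f :&: W| == 1%N by rewrite eqn_leq c1 c0.
    have wW : w \in W.
      have : w \in f :&: W by rewrite ew set11.
      by rewrite inE => /andP [].
    case/bigcupP: wW => e eM we.
    rewrite ew cards1 (bigD1 e) //= sub1set we /=; lia.
  rewrite mulnC -(NH i) -sum_nat_const.
  apply: (@leq_trans (\sum_(f in H i) (#|f :&: W| + \sum_(e in M) (f :&: W \subset e : nat)))).
    by apply: leq_sum.
  rewrite big_split /=; apply: leq_add.
    apply: (leq_trans (@sum_meet V (H i) W (matH i))); apply: (leq_trans (@card_bigcup_le V M)).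
    by rewrite (eq_bigr (fun _ => r) Mr) sum_nat_const cM mulnC.
  rewrite exchange_big /=; apply: leq_sum => e eM.
  by rewrite /priv card_setP.
have F4 : forall i e, i \in U -> e \in M -> (#|priv i e| <= r)%N.
  move=> i e iU eM.
  have mp : is_matching (priv i e).
    move=> a b; rewrite !inE => /andP [aH _] /andP [bH _]. exact: (matH i a b aH bH).
  apply: (@leq_trans (\sum_(f in priv i e) #|f :&: e|)).
    rewrite -sum1_card; apply: leq_sum => f; rewrite inE => /andP [fH fWe]; rewrite card_gt0.
    have := F1 i f iU fH; case/set0Pn => x; rewrite inE => /andP [xf xW].
    by apply/set0Pn; exists x; rewrite inE xf (subsetP fWe) // inE xf xW.
  rewrite -(Mr e eM); exact: sum_meet.
have F5 : forall e, e \in M -> (2 * #|[set i in U | (1 < #|priv i e|)%N]| <= 'C(2 * r, r))%N.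
  move=> e eM; set K := [set i in U | (1 < #|priv i e|)%N].
  pose A i := nth set0 (enum (priv i e)) 0.
  pose B i := nth set0 (enum (priv i e)) 1.
  have AB : forall i, i \in K -> [/\ A i \in priv i e, B i \in priv i e & A i != B i].
    move=> i; rewrite inE => /andP [_ c]; rewrite cardE in c.
    have c0 := ltnW c.
    split; rewrite /A /B.
    - by rewrite -mem_enum; apply: mem_nth.
    - by rewrite -mem_enum; apply: mem_nth.
    - by rewrite nth_uniq ?enum_uniq ?c ?c0.
  pose A' := fun p : 'I_n * bool => if p.2 then A p.1 else B p.1.
  pose B' := fun p : 'I_n * bool => if p.2 then B p.1 else A p.1.
  have PA : forall p, p \in setX K [set: bool] -> A' p \in priv p.1 e /\ B' p \in priv p.1 e.
    move=> [i b]; rewrite inE /= => /andP [iK _]; case: (AB i iK) => h1 h2 _.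
    by rewrite /A' /B'; case: b.
  have hb : \sum_(p | p \in setX K [set: bool]) bw #|A' p| #|B' p| <= 1.
    apply: (@bollobas V _ A' #|[set: V]| [set: V] B') => //.
    - move=> [i b]; rewrite inE /= => /andP [iK _]; case: (AB i iK) => Ai Bi ne.
      rewrite /A' /B' /=; move: Ai Bi; rewrite !inE => /andP [AH _] /andP [BH _].
      case: b; first exact: (matH i _ _ AH BH ne).
      rewrite disjoint_sym; exact: (matH i _ _ AH BH ne).
    - move=> p q pP qP pq.
      have [Pp1 Pp2] := PA p pP; have [Pq1 Pq2] := PA q qP.
      move: pP qP pq Pp1 Pp2 Pq1 Pq2; case: p => [i b]; case: q => [j c].
      rewrite !inE /= => /andP [/andP [iU _] _] /andP [/andP [jU _] _] pq.
      case: (eqVneq i j) => [eij | nij].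
        subst j.
        have bc : b != c by apply: contraNneq pq => ->.
        clear pq.
        move=> h1 h2 h3 h4.
        have hH : A' (i, b) \in H i by move: h1; rewrite ?inE => /andP [].
        suff -> : B' (i, c) = A' (i, b).
          by rewrite -setI_eq0 setIid; exact: nonemp hH.
        by rewrite /A' /B'; case: b c bc h1 h2 h3 h4 hH => [] [].
      move=> /andP [h1 h2] _ _ /andP [h3 h4].
      by apply: (F2 e i j _ _ eM _ _ nij h1 h3 h2 h4); rewrite inE.
  rewrite (eq_bigr (fun _ => bw r r)) in hb; last first.
    move=> p pP; have [h1 h2] := PA p pP.
    move: h1 h2; rewrite !inE => /andP [h1 _] /andP [h2 _].
    by rewrite (cardH _ _ h1) (cardH _ _ h2).
  rewrite sumr_const cardsX cardsT card_bool -mulr_natl /bw ler_pdivrMr ?mul1r ?ler_nat in hb; last first.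
    by rewrite ltr0n bin_gt0 leq_addr.
  by rewrite mulnC mul2n -addnn.
pose X i := \sum_(e in M) ((1 < #|priv i e|)%N : nat).
have G1 : forall i, i \in U -> (2 * N <= (r + 1) * m + (r - 1) * X i)%N.
  move=> i iU; apply: (leq_trans (F3 i iU)).
  have : (\sum_(e in M) #|priv i e| <= \sum_(e in M) (1 + (r - 1) * ((1 < #|priv i e|)%N : nat)))%N.
    apply: leq_sum => e eM; have := F4 i e iU eM.
    case: (ltnP 1 #|priv i e|) => h /=; rewrite ?muln1 ?muln0.
      by move=> hp; rewrite subnKC // ltnW.
    by rewrite addn0.
  rewrite big_split /= sum_nat_const cM -big_distrr /= -/(X i).
  nia.
have G2 : (2 * \sum_(i in U) X i <= m * 'C(2 * r, r))%N.
  rewrite /X exchange_big /= big_distrr /=.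
  apply: (@leq_trans (\sum_(e in M) 'C(2 * r, r))); last by rewrite sum_nat_const cM.
  apply: leq_sum => e eM.
  rewrite (_ : \sum_(i in U) _ = #|[set i in U | (1 < #|priv i e|)%N]|); first exact: F5.
  by rewrite card_setP.
have cU : (#|[set phi e | e in M]| + #|U| = n)%N by rewrite cardsC card_ord.
rewrite card_in_imset // cM in cU.
have nm : n%:R - m%:R = #|U|%:R :> rat.
  have -> : (n%:R : rat) = (m + #|U|)%N%:R by rewrite cU.
  by rewrite natrD addrAC subrr add0r.
rewrite nm.
have rpos : (0:rat) < (r - 1)%N%:R by rewrite ltr0n; lia.
rewrite ler_pdivrMr //.
have L : #|U|%:R * (((2 * N)%N)%:R - ((r + 1) * m)%N%:R) <= ((r - 1) * \sum_(i in U) X i)%N%:R :> rat.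
  rewrite mulr_natl -sumr_const big_distrr /= natr_sum; apply: ler_sum => i iU.
  have := G1 i iU; rewrite -(ler_nat rat) natrD; lra.
apply: le_trans L _.
have G3 : (2 * ((r - 1) * \sum_(i in U) X i))%N%:R <= ((r - 1) * (m * 'C(2 * r, r)))%N%:R :> rat.
  by rewrite ler_nat mulnCA leq_mul2l G2 orbT.
move: G3; rewrite !natrM.
set T := (\sum_(i in U) X i)%:R.
set c := (r - 1)%:R; set mm := m%:R; set C := ('C(2 * r, r))%:R.
move=> G3.
have -> : 2^-1 * C * mm * c = 2^-1 * (c * (mm * C)) by ring.
lra.
Qed.
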